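(* Let $M$ be a smooth manifold of dimension $n\geq2$, $\Gamma$ a symmetric extended affine connection, $V$ a regular extended vector field and $Q$ an extended covector field on $M$. Let $T^k_{ij}(x,p)=T^k_{ji}(x,p)$ be the components of a smooth symmetric extended tensor field of type $(1,2)$, and set $\Gamma'^k_{ij}=\Gamma^k_{ij}+T^k_{ij}$, $Q'_i=Q_i-\sum_{k,s}T^k_{is}p_kV^s$. Then $(V,Q)$ satisfies the weak normality equations $\sum_r\alpha^rP^k_r=0$, $\sum_r\eta_rP^r_k=0$ ($k=1,\dots,n$) computed with respect to $\Gamma$ at all points of $T^*M$ with $p\neq0$ if and only if $(V,Q')$ satisfies the weak normality equations computed with respect to $\Gamma'$ at all such points.
   Context: Local coordinates $x^i$ on $M$ induce $(x,p)$ on $T^*M$; with $S^i_j=\partial x^i/\partial\tilde x^j$, $T^i_j=\partial\tilde x^i/\partial x^j$, $\tilde p_j=\sum_iS^i_jp_i$, a symmetric extended affine connection is given by smooth $\Gamma^k_{ij}(x,p)=\Gamma^k_{ji}(x,p)$ with $\Gamma^k_{ij}=\sum S^k_mT^a_iT^c_j\tilde\Gamma^m_{ac}+\sum_mS^k_m\partial T^m_i/\partial x^j$; extended tensor fields have components that are smooth functions of $(x,p)$ transforming tensorially. The pair $(V,Q)$ with $\Gamma$ defines the Newtonian system $\dot x^i=V^i$, $\dot p_i-\sum\Gamma^k_{ij}p_k\dot x^j=Q_i$. All sums run from $1$ to $n$. For a given connection: $\tilde\nabla^mX=\partial X/\partial p_m$ componentwise; $\nabla_mX^{i_1\dots i_r}_{j_1\dots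 j_s}=\frac{\partial X^{\dots}_{\dots}}{\partial x^m}+\sum_{b,c}p_c\Gamma^c_{mb}\frac{\partial X^{\dots}_{\dots}}{\partial p_b}+\sum_{k=1}^r\sum_a\Gamma^{i_k}_{ma}X^{i_1\dots a\dots i_r}_{j_1\dots j_s}-\sum_{k=1}^s\sum_b\Gamma^b_{mj_k}X^{i_1\dots i_r}_{j_1\dots b\dots j_s}$; $R^k_{rij}=\frac{\partial\Gamma^k_{jr}}{\partial x^i}-\frac{\partial\Gamma^k_{ir}}{\partial x^j}+\sum_m\Gamma^k_{im}\Gamma^m_{jr}-\sum_m\Gamma^k_{jm}\Gamma^m_{ir}+\sum_{m,\alpha}p_\alpha\Gamma^\alpha_{mi}\frac{\partial\Gamma^k_{jr}}{\partial p_m}-\sum_{m,\alpha}p_\alpha\Gamma^\alpha_{mj}\frac{\partial\Gamma^k_{ir}}{\partial p_m}$; $D^{kr}_{ij}=-\partial\Gamma^k_{ij}/\partial p_r$. Regularity of $V$: $(x,p)\mapsto(x,V(x,p))$ is a diffeomorphism $T^*M\to TM$; $V=0$ iff $p=0$; with $W^s=\sum_r(\partial V^r/\partial p_s)p_r$, $\Omega=\sum_sp_sW^s\neq0$ for $p\neq0$. Weak normality equations data (for a given connection and covector field $Q$): $P^i_j=\delta^i_j-W^ip_j/\Omega$; $U_s=\sum_r\nabla_sV^rp_r+Q_s$; $\alpha^k=\sum_r\tilde\nabla^kV^rU_r+\sum_rV^r\nabla_rW^k+\sum_rQ_r\tilde\nabla^rW^k+\sum_rW^r\tilde\nabla^kQ_r-\sum_{r,s,q}p_sD^{sk}_{rq}W^rV^q$;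 $\beta_k=\sum_rV^r\nabla_rU_k+\sum_rQ_r\tilde\nabla^rU_k+\sum_rU_r\nabla_kV^r+\sum_rW^r\nabla_kQ_r-\sum_{r,s,m}(R^s_{rmk}V^m-D^{sm}_{rk}Q_m)W^rp_s$; $\eta_k=\beta_k-U_k\sum_s\alpha^sp_s/\Omega$. *)

(* Defs.v *)
(* Everything is expressed in one coordinate chart
   U (open subset of R^n) of M, with T*U = U x R^n, coordinates (x,p). *)
From HB Require Import structures.
From mathcomp Require Import all_boot all_order all_algebra.
From mathcomp Require Import all_classical all_reals all_analysis.
Set Implicit Arguments. Unset Strict Implicit. Unset Printing Implicit Defensive.
Import Order.TTheory GRing.Theory Num.Theory.
Import numFieldNormedType.Exports.
Local Open Scope classical_set_scope.
Local Open Scope ring_scope.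

Section Defs.
Variables (R : realType) (n : nat).

Definition fn := 'rV[R]_n -> 'rV[R]_n -> R.

Definition ev (i : 'I_n) : 'rV[R]_n := delta_mx 0 i.

Definition pc (p : 'rV[R]_n) (i : 'I_n) : R := p 0 i.

Definition dx (m : 'I_n) (f : fn) : fn := fun x p => derive (fun y => f y p) x (ev m).
Definition dp (m : 'I_n) (f : fn) : fn := fun x p => derive (fun q => f x q) p (ev m).

Definition pd (d : bool * 'I_n) (f : fn) : fn := if d.1 then dx d.2 f else dp d.2 f.
Fixpoint iterD (ds : seq (bool * 'I_n)) (f : fn) : fn :=
  match ds with [::] => f | d :: ds' => pd d (iterD ds' f) end.

Definition smooth_on (U : set 'rV[R]_n) (f : fn) : Prop :=
  forall ds : seq (bool * 'I_n),
    {within U `*` setT, continuous (fun z : 'rV[R]_n * 'rV[R]_n => iterD ds f z.1 z.2)} /\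
    (forall (i : 'I_n) x p, U x ->
       derivable (fun y => iterD ds f y p) x (ev i) /\
       derivable (fun q => iterD ds f x q) p (ev i)).

Definition kdelta (i j : 'I_n) : R := if i == j then 1 else 0.

(* components: Gam k i j = Gamma^k_{ij}; V i = V^i; Q i = Q_i *)
Variables (Gam : 'I_n -> 'I_n -> 'I_n -> fn) (V Q : 'I_n -> fn).

Definition nabla_vec (m : 'I_n) (X : 'I_n -> fn) (i : 'I_n) : fn := fun x p =>
  dx m (X i) x p
  + \sum_(b < n) \sum_(c < n) pc p c * Gam c m b x p * dp b (X i) x p
  + \sum_(a < n) Gam i m a x p * X a x p.

Definition nabla_cov (m : 'I_n) (X : 'I_n -> fn) (j : 'I_n) : fn := fun x p =>
  dx m (X j) x p
  + \sum_(b < n) \sum_(c < n) pc p c * Gam c m b x p * dp b (X j) x p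
  - \sum_(b < n) Gam b m j x p * X b x p.

Definition curv (k r i j : 'I_n) : fn := fun x p =>
  dx i (Gam k j r) x p - dx j (Gam k i r) x p
  + \sum_(m < n) Gam k i m x p * Gam m j r x p
  - \sum_(m < n) Gam k j m x p * Gam m i r x p
  + \sum_(m < n) \sum_(a < n) pc p a * Gam a m i x p * dp m (Gam k j r) x p
  - \sum_(m < n) \sum_(a < n) pc p a * Gam a m j x p * dp m (Gam k i r) x p.

Definition Dt (k r i j : 'I_n) : fn := fun x p => - dp r (Gam k i j) x p.

Definition Wv (s : 'I_n) : fn := fun x p => \sum_(r < n) dp s (V r) x p * pc p r.
Definition Omega : fn := fun x p => \sum_(s < n) pc p s * Wv s x p.
Definition Pm (i j : 'I_n) : fn := fun x p => kdelta i j - Wv i x p * pc p j / Omega x p.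
Definition Uc (s : 'I_n) : fn := fun x p =>
  \sum_(r < n) nabla_vec s V r x p * pc p r + Q s x p.

Definition alpha (k : 'I_n) : fn := fun x p =>
  \sum_(r < n) dp k (V r) x p * Uc r x p
  + \sum_(r < n) V r x p * nabla_vec r Wv k x p
  + \sum_(r < n) Q r x p * dp r (Wv k) x p
  + \sum_(r < n) Wv r x p * dp k (Q r) x p
  - \sum_(r < n) \sum_(s < n) \sum_(q < n) pc p s * Dt s k r q x p * Wv r x p * V q x p.

Definition beta (k : 'I_n) : fn := fun x p =>
  \sum_(r < n) V r x p * nabla_cov r Uc k x p
  + \sum_(r < n) Q r x p * dp r (Uc k) x p
  + \sum_(r < n) Uc r x p * nabla_vec k V r x p
  + \sum_(r < n) Wv r x p * nabla_cov k Q r x p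
  - \sum_(r < n) \sum_(s < n) \sum_(m < n)
      (curv s r m k x p * V m x p - Dt s m r k x p * Q m x p) * Wv r x p * pc p s.

Definition eta (k : 'I_n) : fn := fun x p =>
  beta k x p - Uc k x p * (\sum_(s < n) alpha s x p * pc p s) / Omega x p.

Definition weak_normal_at (x p : 'rV[R]_n) : Prop :=
  forall k : 'I_n,
    \sum_(r < n) alpha r x p * Pm k r x p = 0 /\
    \sum_(r < n) eta r x p * Pm r k x p = 0.

End Defs.

Section Hyps.
Variables (R : realType) (n : nat) (U : set 'rV[R]_n).

Definition sym_connection (Gam : 'I_n -> 'I_n -> 'I_n -> fn R n) : Prop :=
  (forall k i j, smooth_on U (Gam k i j)) /\
  (forall k i j x p, U x -> Gam k i j x p = Gam k j i x p).

Definition regular (V : 'I_n -> fn R n) : Prop :=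
  (forall i, smooth_on U (V i)) /\
  (* (x,p) |-> (x, V(x,p)) is a diffeomorphism T*U -> TU *)
  (exists G : 'I_n -> fn R n,
     (forall i, smooth_on U (G i)) /\
     (forall x p, U x -> \row_i G i x (\row_j V j x p) = p) /\
     (forall x v, U x -> \row_j V j x (\row_i G i x v) = v)) /\
  (forall x p, U x -> ((\row_i V i x p == 0) = (p == 0))) /\
  (forall x p, U x -> p != 0 -> Omega V x p != 0).
End Hyps.

(* Main.v *)
Require Import Defs.
From HB Require Import structures.
From mathcomp Require Import all_boot all_order all_algebra.
From mathcomp Require Import all_classical all_reals all_analysis.
From mathcomp Require Import ring.
Import Order.TTheory GRing.Theory Num.Theory.
Import numFieldNormedType.Exports.
Local Open Scope classical_set_scope.
Local Open Scope ring_scope.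
Set Implicit Arguments. Unset Strict Implicit. Unset Printing Implicit Defensive.

Section N.
Variable R : comRingType.
Lemma sw2 (I : Type) (r : seq I) (F : I -> I -> R) :
  \sum_(i <- r) \sum_(j <- r) F i j = \sum_(j <- r) \sum_(i <- r) F i j.
Proof. exact: exchange_big. Qed.
Lemma sw3 (I : Type) (r : seq I) (F : I -> I -> I -> R) :
  \sum_(i <- r) \sum_(j <- r) \sum_(k <- r) F i j k = \sum_(k <- r) \sum_(i <- r) \sum_(j <- r) F i j k.
Proof. under eq_bigr => i _ do rewrite exchange_big. by rewrite exchange_big. Qed.
Lemma sw4 (I : Type) (r : seq I) (F : I -> I -> I -> I -> R) :
  \sum_(i <- r) \sum_(j <- r) \sum_(k <- r) \sum_(l <- r) F i j k l
  = \sum_(l <- r) \sum_(i <- r) \sum_(j <- r) \sum_(k <- r) F i j k l.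
Proof. under eq_bigr => i _ do rewrite sw3. by rewrite exchange_big. Qed.
Lemma sw5 (I : Type) (r : seq I) (F : I -> I -> I -> I -> I -> R) :
  \sum_(i <- r) \sum_(j <- r) \sum_(k <- r) \sum_(l <- r) \sum_(m <- r) F i j k l m
  = \sum_(m <- r) \sum_(i <- r) \sum_(j <- r) \sum_(k <- r) \sum_(l <- r) F i j k l m.
Proof. under eq_bigr => i _ do rewrite sw4. by rewrite exchange_big. Qed.
Definition symf3 n (X : 'I_n -> 'I_n -> 'I_n -> R) c i j := locked (X c i j + X c j i).
Definition symf4 n (X : 'I_n -> 'I_n -> 'I_n -> 'I_n -> R) m c i j := locked (X m c i j + X m c j i).
End N.
Arguments symf3 : simpl never.
Arguments symf4 : simpl never.

Definition bsum (R : nzRingType) (I : Type) (r : seq I) (F : I -> R) := \sum_(i <- r) F i.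
Lemma bsumE (R : nzRingType) (I : Type) (r : seq I) (F : I -> R) : \sum_(i <- r) F i = @bsum R I r F.
Proof. by []. Qed.

Ltac top_rw := rewrite ?(mulrDl, mulrDr, mulNr, mulrN, opprD, opprK, mulr_sumr, mulr_suml, big_split, sumrN) /=.
Ltac nrm := top_rw; repeat (under eq_bigr => ? _ do nrm; rewrite bsumE); rewrite /bsum; top_rw.
Ltac leaf := rewrite ?/symf3 ?/symf4 -?lock; ring.

Section A.
Variable R : comRingType.
Variable n : nat.
Local Notation I := 'I_n.
Definition alphaF (G : I -> I -> I -> R) (Gp : I -> I -> I -> I -> R) (pp : I -> R)
  (V : I -> R) (Vp : I -> I -> R) (Q : I -> R) (Qp : I -> I -> R)
  (W : I -> R) (Wx Wp : I -> I -> R) (U : I -> R) (k : I) : R :=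
 \sum_(r < n) Vp k r * U r
 + \sum_(r < n) V r * (Wx r k + \sum_(b < n) \sum_(c < n) pp c * G c r b * Wp b k
                       + \sum_(a < n) G k r a * W a)
 + \sum_(r < n) Q r * Wp r k
 + \sum_(r < n) W r * Qp k r
 - \sum_(r < n) \sum_(s < n) \sum_(q < n) pp s * (- Gp k s r q) * W r * V q.
Definition betaF (G : I -> I -> I -> R) (Gx Gp : I -> I -> I -> I -> R) (pp : I -> R)
  (V : I -> R) (Vx Vp : I -> I -> R) (Q : I -> R) (Qx Qp : I -> I -> R)
  (W : I -> R) (U : I -> R) (Ux Up : I -> I -> R) (k : I) : R :=
  \sum_(r < n) V r * (Ux r k + \sum_(b < n) \sum_(c < n) pp c * G c r b * Up b k
                      - \sum_(b < n) G b r k * U b)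
  + \sum_(r < n) Q r * Up r k
  + \sum_(r < n) U r * (Vx k r + \sum_(b < n) \sum_(c < n) pp c * G c k b * Vp b r
                      + \sum_(a < n) G r k a * V a)
  + \sum_(r < n) W r * (Qx k r + \sum_(b < n) \sum_(c < n) pp c * G c k b * Qp b r
                      - \sum_(b < n) G b k r * Q b)
  - \sum_(r < n) \sum_(s < n) \sum_(m < n)
      ((Gx m s k r - Gx k s m r
        + \sum_(q < n) G s m q * G q k r
        - \sum_(q < n) G s k q * G q m r
        + \sum_(q < n) \sum_(a < n) pp a * G a q m * Gp q s k r
        - \sum_(q < n) \sum_(a < n) pp a * G a q k * Gp q s m r) * V m
       - (- Gp m s r k) * Q m) * W r * pp s.

Variables (pp : I -> R) (G0 T0 : I -> I -> I -> R) (Gx Gp0 Tx0 Tp0 : I -> I -> I -> I -> R)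
  (V : I -> R) (Vx Vp : I -> I -> R) (Q : I -> R) (Qx Qp : I -> I -> R)
  (W : I -> R) (Wx Wp : I -> I -> R) (U : I -> R) (Ux Up : I -> I -> R).
Local Notation T := (@symf3 R n T0).
Local Notation G := (@symf3 R n G0).
Local Notation Tx := (@symf4 R n Tx0).
Local Notation Tp := (@symf4 R n Tp0).
Local Notation Gp := (@symf4 R n Gp0).
Definition Z i := \sum_(k < n) \sum_(s < n) T k i s * pp k * V s.
Definition Zx m i := \sum_(k < n) \sum_(s < n) (Tx m k i s * pp k * V s + T k i s * pp k * Vx m s).
Definition Zp m i := \sum_(k < n) \sum_(s < n) (Tp m k i s * pp k * V s + T k i s * pp k * Vp m s)
   + \sum_(s < n) T m i s * V s.
Definition E k := \sum_(b < n) (\sum_(c < n) pp c * T c k b) * W b.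
Definition Ex m k := \sum_(b < n) ((\sum_(c < n) pp c * Tx m c k b) * W b + (\sum_(c < n) pp c * T c k b) * Wx m b).
Definition Ep m k := \sum_(b < n) ((\sum_(c < n) pp c * Tp m c k b + T m k b) * W b + (\sum_(c < n) pp c * T c k b) * Wp m b).

Lemma alpha_inv k :
  alphaF (fun c i j => G c i j + T c i j) (fun m c i j => Gp m c i j + Tp m c i j) pp V Vp
    (fun i => Q i - Z i) (fun m i => Qp m i - Zp m i) W Wx Wp (fun i => U i + E i) k
  = alphaF G Gp pp V Vp Q Qp W Wx Wp U k.
Proof.
rewrite /alphaF /Z /Zp /E /=.
set IE := index_enum _.
nrm.
have e1 : (\sum_(i <- IE) (\sum_(i0 <- IE) (\sum_(i1 <- IE) ((W i) * (((T i0 i i1) * (pp i0)) * (Vp k i1)))))) = (\sum_(i <- IE) (\sum_(i0 <- IE) (\sum_(i1 <- IE) ((Vp k i) * (((pp i1) * (T i1 i i0)) * (W i0)))))).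
  by rewrite [RHS]sw2; apply: eq_bigr => i0 _; rewrite [RHS]sw2; apply: eq_bigr => i1 _; apply: eq_bigr => i _; leaf.
have e2 : (\sum_(i <- IE) (\sum_(i0 <- IE) (\sum_(i1 <- IE) ((((T i0 i i1) * (pp i0)) * (V i1)) * (Wp i k))))) = (\sum_(i <- IE) (\sum_(i0 <- IE) (\sum_(i1 <- IE) ((V i) * (((pp i1) * (T i1 i i0)) * (Wp i0 k)))))).
  by rewrite [RHS]sw2; apply: eq_bigr => i0 _; rewrite [RHS]sw2; apply: eq_bigr => i1 _; apply: eq_bigr => i _; leaf.
have e3 : (\sum_(i <- IE) (\sum_(i0 <- IE) ((W i) * ((T k i i0) * (V i0))))) = (\sum_(i <- IE) (\sum_(i0 <- IE) ((V i) * ((T k i i0) * (W i0))))).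
  by rewrite [RHS]sw2; apply: eq_bigr => i0 _; apply: eq_bigr => i _; leaf.
have e4 : (\sum_(i <- IE) (\sum_(i0 <- IE) (\sum_(i1 <- IE) ((((pp i0) * (Tp k i0 i i1)) * (W i)) * (V i1))))) = (\sum_(i <- IE) (\sum_(i0 <- IE) (\sum_(i1 <- IE) ((W i) * (((Tp k i0 i i1) * (pp i0)) * (V i1)))))).
  by apply: eq_bigr => i _; apply: eq_bigr => i0 _; apply: eq_bigr => i1 _; leaf.
rewrite e1 e2 e3 e4.

ring.
Qed.
Lemma beta_ch k :
  betaF (fun c i j => G c i j + T c i j) (fun m c i j => Gx m c i j + Tx m c i j)
    (fun m c i j => Gp m c i j + Tp m c i j) pp V Vx Vp
    (fun i => Q i - Z i) (fun m i => Qx m i - Zx m i) (fun m i => Qp m i - Zp m i) W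
    (fun i => U i + E i) (fun m i => Ux m i + Ex m i) (fun m i => Up m i + Ep m i) k
  = betaF G Gx Gp pp V Vx Vp Q Qx Qp W U Ux Up k
    + \sum_(r < n) (\sum_(c < n) pp c * T c k r) * alphaF G Gp pp V Vp Q Qp W Wx Wp U r.
Proof.
rewrite /betaF /alphaF /Z /Zx /Zp /E /Ex /Ep /=.
set IE := index_enum _.
nrm.
have e1 : (\sum_(i <- IE) (\sum_(i0 <- IE) (\sum_(i1 <- IE) ((((Tx i1 i0 k i) * (V i1)) * (W i)) * (pp i0))))) = (\sum_(i <- IE) (\sum_(i0 <- IE) (\sum_(i1 <- IE) ((V i) * (((pp i1) * (Tx i i1 k i0)) * (W i0)))))).
  by rewrite [RHS]sw2; apply: eq_bigr => i0 _; rewrite [RHS]sw2; apply: eq_bigr => i1 _; apply: eq_bigr => i _; leaf.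
have e2 : (\sum_(i <- IE) (\sum_(i0 <- IE) (\sum_(i1 <- IE) (((pp i1) * (T i1 k i)) * ((V i0) * (Wx i0 i)))))) = (\sum_(i <- IE) (\sum_(i0 <- IE) (\sum_(i1 <- IE) ((V i) * (((pp i1) * (T i1 k i0)) * (Wx i i0)))))).
  by rewrite [RHS]sw2; apply: eq_bigr => i0 _; apply: eq_bigr => i _; apply: eq_bigr => i1 _; leaf.
have e3 : (\sum_(i <- IE) (\sum_(i0 <- IE) (\sum_(i1 <- IE) ((((T i0 i i1) * (pp i0)) * (V i1)) * (Up i k))))) = (\sum_(i <- IE) (\sum_(i0 <- IE) (\sum_(i1 <- IE) ((V i) * (((pp i1) * (T i1 i i0)) * (Up i0 k)))))).
  by rewrite [RHS]sw2; apply: eq_bigr => i0 _; rewrite [RHS]sw2; apply: eq_bigr => i1 _; apply: eq_bigr => i _; leaf.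
have e4 : (\sum_(i <- IE) (\sum_(i0 <- IE) (\sum_(i1 <- IE) (\sum_(i2 <- IE) (\sum_(i3 <- IE) ((((((pp i3) * (G i3 i2 i1)) * (Tp i2 i0 k i)) * (V i1)) * (W i)) * (pp i0))))))) = (\sum_(i <- IE) (\sum_(i0 <- IE) (\sum_(i1 <- IE) (\sum_(i2 <- IE) (\sum_(i3 <- IE) ((V i) * (((pp i1) * (G i1 i i0)) * (((pp i3) * (Tp i0 i3 k i2)) * (W i2))))))))).
  by rewrite [RHS]sw4; apply: eq_bigr => i2 _; rewrite [RHS]sw4; apply: eq_bigr => i3 _; apply: eq_bigr => i _; apply: eq_bigr => i0 _; apply: eq_bigr => i1 _; leaf.
have e5 : (\sum_(i <- IE) (\sum_(i0 <- IE) (\sum_(i1 <- IE) (\sum_(i2 <- IE) (((((G i0 i1 i2) * (T i2 k i)) * (V i1)) * (W i)) * (pp i0)))))) = (\sum_(i <- IE) (\sum_(i0 <- IE) (\sum_(i1 <- IE) (\sum_(i2 <- IE) ((V i) * (((pp i1) * (G i1 i i0)) * ((T i0 k i2) * (W i2)))))))).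
  by rewrite [RHS]sw4; apply: eq_bigr => i2 _; rewrite [RHS]sw3; apply: eq_bigr => i1 _; apply: eq_bigr => i _; apply: eq_bigr => i0 _; leaf.
have e6 : (\sum_(i <- IE) (\sum_(i0 <- IE) (\sum_(i1 <- IE) (\sum_(i2 <- IE) (\sum_(i3 <- IE) (((pp i1) * (T i1 k i)) * ((V i0) * (((pp i3) * (G i3 i0 i2)) * (Wp i2 i))))))))) = (\sum_(i <- IE) (\sum_(i0 <- IE) (\sum_(i1 <- IE) (\sum_(i2 <- IE) (\sum_(i3 <- IE) ((V i) * (((pp i1) * (G i1 i i0)) * (((pp i3) * (T i3 k i2)) * (Wp i0 i2))))))))).
  by rewrite [RHS]sw4; apply: eq_bigr => i2 _; apply: eq_bigr => i _; rewrite [RHS]sw3; apply: eq_bigr => i3 _; apply: eq_bigr => i0 _; apply: eq_bigr => i1 _; leaf.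
have e7 : (\sum_(i <- IE) (\sum_(i0 <- IE) (\sum_(i1 <- IE) (\sum_(i2 <- IE) (\sum_(i3 <- IE) ((((T i1 i i3) * (pp i1)) * (V i3)) * (((pp i2) * (Tp i i2 k i0)) * (W i0)))))))) = (\sum_(i <- IE) (\sum_(i0 <- IE) (\sum_(i1 <- IE) (\sum_(i2 <- IE) (\sum_(i3 <- IE) ((V i) * (((pp i1) * (T i1 i i0)) * (((pp i3) * (Tp i0 i3 k i2)) * (W i2))))))))).
  by rewrite [RHS]sw2; apply: eq_bigr => i0 _; rewrite [RHS]sw3; apply: eq_bigr => i2 _; rewrite [RHS]sw2; apply: eq_bigr => i1 _; rewrite [RHS]sw2; apply: eq_bigr => i3 _; apply: eq_bigr => i _; leaf.
have e8 : (\sum_(i <- IE) (\sum_(i0 <- IE) (\sum_(i1 <- IE) (\sum_(i2 <- IE) (\sum_(i3 <- IE) ((((((pp i3) * (T i3 i2 i1)) * (Tp i2 i0 k i)) * (V i1)) * (W i)) * (pp i0))))))) = (\sum_(i <- IE) (\sum_(i0 <- IE) (\sum_(i1 <- IE) (\sum_(i2 <- IE) (\sum_(i3 <- IE) ((V i) * (((pp i1) * (T i1 i i0)) * (((pp i3) * (Tp i0 i3 k i2)) * (W i2))))))))).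
  by rewrite [RHS]sw4; apply: eq_bigr => i2 _; rewrite [RHS]sw4; apply: eq_bigr => i3 _; apply: eq_bigr => i _; apply: eq_bigr => i0 _; apply: eq_bigr => i1 _; leaf.
have e9 : (\sum_(i <- IE) (\sum_(i0 <- IE) (\sum_(i1 <- IE) (\sum_(i2 <- IE) (\sum_(i3 <- IE) ((((Tp i1 i0 i k) * (((T i2 i1 i3) * (pp i2)) * (V i3))) * (W i)) * (pp i0))))))) = (\sum_(i <- IE) (\sum_(i0 <- IE) (\sum_(i1 <- IE) (\sum_(i2 <- IE) (\sum_(i3 <- IE) ((V i) * (((pp i1) * (T i1 i i0)) * (((pp i3) * (Tp i0 i3 k i2)) * (W i2))))))))).
  by rewrite [RHS]sw4; apply: eq_bigr => i2 _; rewrite [RHS]sw4; apply: eq_bigr => i3 _; rewrite [RHS]sw2; apply: eq_bigr => i0 _; rewrite [RHS]sw2; apply: eq_bigr => i1 _; apply: eq_bigr => i _; leaf.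
have e10 : (\sum_(i <- IE) (\sum_(i0 <- IE) (\sum_(i1 <- IE) (\sum_(i2 <- IE) ((((T i1 i i2) * (pp i1)) * (V i2)) * ((T i k i0) * (W i0))))))) = (\sum_(i <- IE) (\sum_(i0 <- IE) (\sum_(i1 <- IE) (\sum_(i2 <- IE) ((V i) * (((pp i1) * (T i1 i i0)) * ((T i0 k i2) * (W i2)))))))).
  by rewrite [RHS]sw2; apply: eq_bigr => i0 _; rewrite [RHS]sw3; apply: eq_bigr => i2 _; rewrite [RHS]sw2; apply: eq_bigr => i1 _; apply: eq_bigr => i _; leaf.
have e11 : (\sum_(i <- IE) (\sum_(i0 <- IE) (\sum_(i1 <- IE) (\sum_(i2 <- IE) ((W i) * ((T i0 k i) * (((T i1 i0 i2) * (pp i1)) * (V i2)))))))) = (\sum_(i <- IE) (\sum_(i0 <- IE) (\sum_(i1 <- IE) (\sum_(i2 <- IE) ((V i) * (((pp i1) * (T i1 i i0)) * ((T i0 k i2) * (W i2)))))))).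
  by rewrite [RHS]sw4; apply: eq_bigr => i2 _; rewrite [RHS]sw2; apply: eq_bigr => i0 _; rewrite [RHS]sw2; apply: eq_bigr => i1 _; apply: eq_bigr => i _; leaf.
have e12 : (\sum_(i <- IE) (\sum_(i0 <- IE) (\sum_(i1 <- IE) (\sum_(i2 <- IE) (((((T i0 i1 i2) * (T i2 k i)) * (V i1)) * (W i)) * (pp i0)))))) = (\sum_(i <- IE) (\sum_(i0 <- IE) (\sum_(i1 <- IE) (\sum_(i2 <- IE) ((V i) * (((pp i1) * (T i1 i i0)) * ((T i0 k i2) * (W i2)))))))).
  by rewrite [RHS]sw4; apply: eq_bigr => i2 _; rewrite [RHS]sw3; apply: eq_bigr => i1 _; apply: eq_bigr => i _; apply: eq_bigr => i0 _; leaf.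
have e13 : (\sum_(i <- IE) (\sum_(i0 <- IE) (\sum_(i1 <- IE) (\sum_(i2 <- IE) (\sum_(i3 <- IE) ((((T i1 i i3) * (pp i1)) * (V i3)) * (((pp i2) * (T i2 k i0)) * (Wp i i0)))))))) = (\sum_(i <- IE) (\sum_(i0 <- IE) (\sum_(i1 <- IE) (\sum_(i2 <- IE) (\sum_(i3 <- IE) ((V i) * (((pp i1) * (T i1 i i0)) * (((pp i3) * (T i3 k i2)) * (Wp i0 i2))))))))).
  by rewrite [RHS]sw2; apply: eq_bigr => i0 _; rewrite [RHS]sw3; apply: eq_bigr => i2 _; rewrite [RHS]sw2; apply: eq_bigr => i1 _; rewrite [RHS]sw2; apply: eq_bigr => i3 _; apply: eq_bigr => i _; leaf.
have e14 : (\sum_(i <- IE) (\sum_(i0 <- IE) ((U i) * ((G i k i0) * (V i0))))) = (\sum_(i <- IE) (\sum_(i0 <- IE) ((V i) * ((G i0 i k) * (U i0))))).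
  by rewrite [RHS]sw2; apply: eq_bigr => i0 _; apply: eq_bigr => i _; leaf.
have e15 : (\sum_(i <- IE) (\sum_(i0 <- IE) (\sum_(i1 <- IE) (\sum_(i2 <- IE) ((((pp i2) * (T i2 i i1)) * (W i1)) * ((G i k i0) * (V i0))))))) = (\sum_(i <- IE) (\sum_(i0 <- IE) (\sum_(i1 <- IE) (\sum_(i2 <- IE) ((V i) * ((G i0 i k) * (((pp i2) * (T i2 i0 i1)) * (W i1)))))))).
  by rewrite [RHS]sw2; apply: eq_bigr => i0 _; apply: eq_bigr => i _; apply: eq_bigr => i1 _; apply: eq_bigr => i2 _; leaf.
have e16 : (\sum_(i <- IE) (\sum_(i0 <- IE) ((U i) * ((T i k i0) * (V i0))))) = (\sum_(i <- IE) (\sum_(i0 <- IE) ((V i) * ((T i0 i k) * (U i0))))).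
  by rewrite [RHS]sw2; apply: eq_bigr => i0 _; apply: eq_bigr => i _; leaf.
have e17 : (\sum_(i <- IE) (\sum_(i0 <- IE) (\sum_(i1 <- IE) (\sum_(i2 <- IE) ((((pp i2) * (T i2 i i1)) * (W i1)) * ((T i k i0) * (V i0))))))) = (\sum_(i <- IE) (\sum_(i0 <- IE) (\sum_(i1 <- IE) (\sum_(i2 <- IE) ((V i) * ((T i0 i k) * (((pp i2) * (T i2 i0 i1)) * (W i1)))))))).
  by rewrite [RHS]sw2; apply: eq_bigr => i0 _; apply: eq_bigr => i _; apply: eq_bigr => i1 _; apply: eq_bigr => i2 _; leaf.
have e18 : (\sum_(i <- IE) (\sum_(i0 <- IE) (\sum_(i1 <- IE) ((((Tp i1 i0 i k) * (Q i1)) * (W i)) * (pp i0))))) = (\sum_(i <- IE) (\sum_(i0 <- IE) (\sum_(i1 <- IE) ((Q i) * (((pp i1) * (Tp i i1 k i0)) * (W i0)))))).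
  by rewrite [RHS]sw2; apply: eq_bigr => i0 _; rewrite [RHS]sw2; apply: eq_bigr => i1 _; apply: eq_bigr => i _; leaf.
have e19 : (\sum_(i <- IE) (\sum_(i0 <- IE) ((W i) * ((T i0 k i) * (Q i0))))) = (\sum_(i <- IE) (\sum_(i0 <- IE) ((Q i) * ((T i k i0) * (W i0))))).
  by rewrite [RHS]sw2; apply: eq_bigr => i0 _; apply: eq_bigr => i _; leaf.
have e20 : (\sum_(i <- IE) (\sum_(i0 <- IE) (\sum_(i1 <- IE) (((pp i1) * (T i1 k i)) * ((Q i0) * (Wp i0 i)))))) = (\sum_(i <- IE) (\sum_(i0 <- IE) (\sum_(i1 <- IE) ((Q i) * (((pp i1) * (T i1 k i0)) * (Wp i i0)))))).
  by rewrite [RHS]sw2; apply: eq_bigr => i0 _; apply: eq_bigr => i _; apply: eq_bigr => i1 _; leaf.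
have e21 : (\sum_(i <- IE) (\sum_(i0 <- IE) (\sum_(i1 <- IE) (((pp i1) * (T i1 k i)) * ((Vp i i0) * (U i0)))))) = (\sum_(i <- IE) (\sum_(i0 <- IE) (\sum_(i1 <- IE) ((U i) * (((pp i1) * (T i1 k i0)) * (Vp i0 i)))))).
  by rewrite [RHS]sw2; apply: eq_bigr => i0 _; apply: eq_bigr => i _; apply: eq_bigr => i1 _; leaf.
have e22 : (\sum_(i <- IE) (\sum_(i0 <- IE) (\sum_(i1 <- IE) ((W i) * (((T i0 i i1) * (pp i0)) * (Vx k i1)))))) = (\sum_(i <- IE) (\sum_(i0 <- IE) (\sum_(i1 <- IE) ((((pp i1) * (T i1 i i0)) * (W i0)) * (Vx k i))))).
  by rewrite [RHS]sw2; apply: eq_bigr => i0 _; rewrite [RHS]sw2; apply: eq_bigr => i1 _; apply: eq_bigr => i _; leaf.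
have e23 : (\sum_(i <- IE) (\sum_(i0 <- IE) (\sum_(i1 <- IE) (\sum_(i2 <- IE) (\sum_(i3 <- IE) ((W i) * (((pp i1) * (G i1 k i0)) * (((T i2 i i3) * (pp i2)) * (Vp i0 i3))))))))) = (\sum_(i <- IE) (\sum_(i0 <- IE) (\sum_(i1 <- IE) (\sum_(i2 <- IE) (\sum_(i3 <- IE) ((((pp i3) * (T i3 i i2)) * (W i2)) * (((pp i1) * (G i1 k i0)) * (Vp i0 i)))))))).
  by rewrite [RHS]sw4; apply: eq_bigr => i2 _; rewrite [RHS]sw2; apply: eq_bigr => i0 _; rewrite [RHS]sw2; apply: eq_bigr => i1 _; rewrite [RHS]sw2; apply: eq_bigr => i3 _; apply: eq_bigr => i _; leaf.
have e24 : (\sum_(i <- IE) (\sum_(i0 <- IE) (\sum_(i1 <- IE) (\sum_(i2 <- IE) (\sum_(i3 <- IE) ((W i) * (((pp i1) * (T i1 k i0)) * (((T i2 i i3) * (pp i2)) * (Vp i0 i3))))))))) = (\sum_(i <- IE) (\sum_(i0 <- IE) (\sum_(i1 <- IE) (\sum_(i2 <- IE) (\sum_(i3 <- IE) ((((pp i3) * (T i3 i i2)) * (W i2)) * (((pp i1) * (T i1 k i0)) * (Vp i0 i)))))))).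
  by rewrite [RHS]sw4; apply: eq_bigr => i2 _; rewrite [RHS]sw2; apply: eq_bigr => i0 _; rewrite [RHS]sw2; apply: eq_bigr => i1 _; rewrite [RHS]sw2; apply: eq_bigr => i3 _; apply: eq_bigr => i _; leaf.
have e25 : (\sum_(i <- IE) (\sum_(i0 <- IE) (\sum_(i1 <- IE) ((((Tx k i0 i1 i) * (V i1)) * (W i)) * (pp i0))))) = (\sum_(i <- IE) (\sum_(i0 <- IE) (\sum_(i1 <- IE) ((W i) * (((Tx k i0 i i1) * (pp i0)) * (V i1)))))).
  by apply: eq_bigr => i _; apply: eq_bigr => i0 _; apply: eq_bigr => i1 _; leaf.
have e26 : (\sum_(i <- IE) (\sum_(i0 <- IE) (\sum_(i1 <- IE) (((pp i1) * (T i1 k i)) * ((W i0) * (Qp i i0)))))) = (\sum_(i <- IE) (\sum_(i0 <- IE) (\sum_(i1 <- IE) ((W i) * (((pp i1) * (T i1 k i0)) * (Qp i0 i)))))).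
  by rewrite [RHS]sw2; apply: eq_bigr => i0 _; apply: eq_bigr => i _; apply: eq_bigr => i1 _; leaf.
have e27 : (\sum_(i <- IE) (\sum_(i0 <- IE) (\sum_(i1 <- IE) (\sum_(i2 <- IE) (\sum_(i3 <- IE) ((((((pp i3) * (G i3 i2 k)) * (Tp i2 i0 i1 i)) * (V i1)) * (W i)) * (pp i0))))))) = (\sum_(i <- IE) (\sum_(i0 <- IE) (\sum_(i1 <- IE) (\sum_(i2 <- IE) (\sum_(i3 <- IE) ((W i) * (((pp i1) * (G i1 k i0)) * (((Tp i0 i2 i i3) * (pp i2)) * (V i3))))))))).
  by apply: eq_bigr => i _; rewrite [RHS]sw3; apply: eq_bigr => i2 _; rewrite [RHS]sw3; apply: eq_bigr => i3 _; apply: eq_bigr => i0 _; apply: eq_bigr => i1 _; leaf.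
have e28 : (\sum_(i <- IE) (\sum_(i0 <- IE) (\sum_(i1 <- IE) (\sum_(i2 <- IE) (((((G i0 k i2) * (T i2 i1 i)) * (V i1)) * (W i)) * (pp i0)))))) = (\sum_(i <- IE) (\sum_(i0 <- IE) (\sum_(i1 <- IE) (\sum_(i2 <- IE) ((W i) * (((pp i1) * (G i1 k i0)) * ((T i0 i i2) * (V i2)))))))).
  by apply: eq_bigr => i _; rewrite [RHS]sw2; apply: eq_bigr => i1 _; rewrite [RHS]sw2; apply: eq_bigr => i2 _; apply: eq_bigr => i0 _; leaf.
have e29 : (\sum_(i <- IE) (\sum_(i0 <- IE) (\sum_(i1 <- IE) (\sum_(i2 <- IE) (\sum_(i3 <- IE) ((((((pp i3) * (T i3 i2 k)) * (Tp i2 i0 i1 i)) * (V i1)) * (W i)) * (pp i0))))))) = (\sum_(i <- IE) (\sum_(i0 <- IE) (\sum_(i1 <- IE) (\sum_(i2 <- IE) (\sum_(i3 <- IE) ((W i) * (((pp i1) * (T i1 k i0)) * (((Tp i0 i2 i i3) * (pp i2)) * (V i3))))))))).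
  by apply: eq_bigr => i _; rewrite [RHS]sw3; apply: eq_bigr => i2 _; rewrite [RHS]sw3; apply: eq_bigr => i3 _; apply: eq_bigr => i0 _; apply: eq_bigr => i1 _; leaf.
have e30 : (\sum_(i <- IE) (\sum_(i0 <- IE) (\sum_(i1 <- IE) (\sum_(i2 <- IE) (((((T i0 k i2) * (T i2 i1 i)) * (V i1)) * (W i)) * (pp i0)))))) = (\sum_(i <- IE) (\sum_(i0 <- IE) (\sum_(i1 <- IE) (\sum_(i2 <- IE) ((W i) * (((pp i1) * (T i1 k i0)) * ((T i0 i i2) * (V i2)))))))).
  by apply: eq_bigr => i _; rewrite [RHS]sw2; apply: eq_bigr => i1 _; rewrite [RHS]sw2; apply: eq_bigr => i2 _; apply: eq_bigr => i0 _; leaf.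
have e31 : (\sum_(i <- IE) (\sum_(i0 <- IE) (\sum_(i1 <- IE) (\sum_(i2 <- IE) (((((T i0 i1 i2) * (G i2 k i)) * (V i1)) * (W i)) * (pp i0)))))) = (\sum_(i <- IE) (\sum_(i0 <- IE) (\sum_(i1 <- IE) (\sum_(i2 <- IE) ((W i) * ((G i0 k i) * (((T i1 i0 i2) * (pp i1)) * (V i2)))))))).
  by apply: eq_bigr => i _; rewrite [RHS]sw2; apply: eq_bigr => i1 _; rewrite [RHS]sw2; apply: eq_bigr => i2 _; apply: eq_bigr => i0 _; leaf.
have e32 : (\sum_(i <- IE) (\sum_(i0 <- IE) (\sum_(i1 <- IE) (\sum_(i2 <- IE) (((pp i1) * (T i1 k i)) * ((V i0) * ((G i i0 i2) * (W i2)))))))) = (\sum_(i <- IE) (\sum_(i0 <- IE) (\sum_(i1 <- IE) (\sum_(i2 <- IE) (((((T i0 k i2) * (G i2 i1 i)) * (V i1)) * (W i)) * (pp i0)))))).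
  by rewrite [RHS]sw4; apply: eq_bigr => i2 _; rewrite [RHS]sw3; apply: eq_bigr => i1 _; rewrite [RHS]sw2; apply: eq_bigr => i0 _; apply: eq_bigr => i _; leaf.
have e33 : (\sum_(i <- IE) (\sum_(i0 <- IE) (\sum_(i1 <- IE) (\sum_(i2 <- IE) (\sum_(i3 <- IE) ((((Gp i1 i0 i k) * (((T i2 i1 i3) * (pp i2)) * (V i3))) * (W i)) * (pp i0))))))) = (\sum_(i <- IE) (\sum_(i0 <- IE) (\sum_(i1 <- IE) (\sum_(i2 <- IE) (\sum_(i3 <- IE) ((((((pp i3) * (T i3 i2 i1)) * (Gp i2 i0 k i)) * (V i1)) * (W i)) * (pp i0))))))).
  by apply: eq_bigr => i _; apply: eq_bigr => i0 _; rewrite [RHS]sw2; apply: eq_bigr => i2 _; rewrite [RHS]sw2; apply: eq_bigr => i3 _; apply: eq_bigr => i1 _; leaf.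
have e34 : (\sum_(i <- IE) (\sum_(i0 <- IE) (\sum_(i1 <- IE) (\sum_(i2 <- IE) (\sum_(i3 <- IE) (((pp i3) * (T i3 k i)) * ((((pp i1) * (Gp i i1 i0 i2)) * (W i0)) * (V i2)))))))) = (\sum_(i <- IE) (\sum_(i0 <- IE) (\sum_(i1 <- IE) (\sum_(i2 <- IE) (\sum_(i3 <- IE) ((((((pp i3) * (T i3 i2 k)) * (Gp i2 i0 i1 i)) * (V i1)) * (W i)) * (pp i0))))))).
  by rewrite [RHS]sw4; apply: eq_bigr => i2 _; apply: eq_bigr => i _; apply: eq_bigr => i0 _; apply: eq_bigr => i1 _; apply: eq_bigr => i3 _; leaf.
rewrite e1 e2 e3 e4 e5 e6 e7 e8 e9 e10 e11 e12 e13 e14 e15 e16 e17 e18 e19 e20 e21 e22 e23 e24 e25 e26 e27 e28 e29 e30 e31 e32 e33 e34.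

ring.
Qed.
End A.
Arguments alphaF {R n}.
Arguments betaF {R n}.

Section UU.
Variable R : comRingType.
Variable n : nat.
Local Notation I := 'I_n.
Lemma U_ch (Ga Ta : I -> I -> I -> R) (Vx Vp : I -> I -> R) (V Q pp : I -> R) k :
 \sum_(r < n) (Vx k r + \sum_(b < n) \sum_(c < n) pp c * (Ga c k b + Ta c k b) * Vp b r
               + \sum_(a < n) (Ga r k a + Ta r k a) * V a) * pp r
   + (Q k - \sum_(l < n) \sum_(s < n) Ta l k s * pp l * V s)
 = (\sum_(r < n) (Vx k r + \sum_(b < n) \sum_(c < n) pp c * Ga c k b * Vp b r
               + \sum_(a < n) Ga r k a * V a) * pp r + Q k)
   + \sum_(b < n) (\sum_(c < n) pp c * Ta c k b) * (\sum_(r < n) Vp b r * pp r).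
Proof.
set IE := index_enum _.
nrm.
have e1 : (\sum_(i <- IE) (\sum_(i0 <- IE) (\sum_(i1 <- IE) (((pp i1) * (Ta i1 k i)) * ((Vp i i0) * (pp i0)))))) = (\sum_(i <- IE) (\sum_(i0 <- IE) (\sum_(i1 <- IE) ((((pp i1) * (Ta i1 k i0)) * (Vp i0 i)) * (pp i))))).
  by rewrite [RHS]sw2; apply: eq_bigr => i0 _; apply: eq_bigr => i _; apply: eq_bigr => i1 _; leaf.
have e2 : (\sum_(i <- IE) (\sum_(i0 <- IE) (((Ta i k i0) * (pp i)) * (V i0)))) = (\sum_(i <- IE) (\sum_(i0 <- IE) (((Ta i k i0) * (V i0)) * (pp i)))).
  by apply: eq_bigr => i _; apply: eq_bigr => i0 _; leaf.
rewrite e1 e2.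

ring.
Qed.
End UU.

Lemma half_sym (R : realType) (a b : R) : a = b -> a = a / 2 + b / 2.
Proof. by move=> ->; rewrite -splitr. Qed.

Lemma alpha_gen (R : realType) (n : nat) (pp : 'I_n -> R)
  (G T G' : 'I_n -> 'I_n -> 'I_n -> R) (Gp Tp Gp' : 'I_n -> 'I_n -> 'I_n -> 'I_n -> R)
  (V : 'I_n -> R) (Vp : 'I_n -> 'I_n -> R) (Q Q' : 'I_n -> R) (Qp Qp' : 'I_n -> 'I_n -> R)
  (W : 'I_n -> R) (Wx Wp : 'I_n -> 'I_n -> R) (U U' : 'I_n -> R) k :
  (forall c i j, G c i j = G c j i) -> (forall c i j, T c i j = T c j i) ->
  (forall m c i j, Gp m c i j = Gp m c j i) -> (forall m c i j, Tp m c i j = Tp m c j i) ->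
  (forall c i j, G' c i j = G c i j + T c i j) ->
  (forall m c i j, Gp' m c i j = Gp m c i j + Tp m c i j) ->
  (forall i, Q' i = Q i - \sum_(l < n) \sum_(s < n) T l i s * pp l * V s) ->
  (forall m i, Qp' m i = Qp m i - (\sum_(l < n) \sum_(s < n)
        (Tp m l i s * pp l * V s + T l i s * pp l * Vp m s) + \sum_(s < n) T m i s * V s)) ->
  (forall i, U' i = U i + \sum_(b < n) (\sum_(c < n) pp c * T c i b) * W b) ->
  alphaF G' Gp' pp V Vp Q' Qp' W Wx Wp U' k = alphaF G Gp pp V Vp Q Qp W Wx Wp U k.
Proof.
move=> sG sT sGp sTp hG hGp hQ hQp hU.
have eG : G = symf3 (fun c i j => G c i j / 2).
  by apply/funext => c; apply/funext => i; apply/funext => j; rewrite /symf3 -lock -half_sym.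
have eT : T = symf3 (fun c i j => T c i j / 2).
  by apply/funext => c; apply/funext => i; apply/funext => j; rewrite /symf3 -lock -half_sym.
have eGp : Gp = symf4 (fun m c i j => Gp m c i j / 2).
  by apply/funext => m; apply/funext => c; apply/funext => i; apply/funext => j;
     rewrite /symf4 -lock -half_sym.
have eTp : Tp = symf4 (fun m c i j => Tp m c i j / 2).
  by apply/funext => m; apply/funext => c; apply/funext => i; apply/funext => j;
     rewrite /symf4 -lock -half_sym.
have -> : G' = (fun c i j => G c i j + T c i j).
  by apply/funext => c; apply/funext => i; apply/funext => j.
have -> : Gp' = (fun m c i j => Gp m c i j + Tp m c i j).
  by apply/funext => m; apply/funext => c; apply/funext => i; apply/funext => j.
have -> : Q' = (fun i => Q i - \sum_(l < n) \sum_(s < n) T l i s * pp l * V s).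
  by apply/funext => i.
have -> : Qp' = (fun m i => Qp m i - (\sum_(l < n) \sum_(s < n)
        (Tp m l i s * pp l * V s + T l i s * pp l * Vp m s) + \sum_(s < n) T m i s * V s)).
  by apply/funext => m; apply/funext => i.
have -> : U' = (fun i => U i + \sum_(b < n) (\sum_(c < n) pp c * T c i b) * W b).
  by apply/funext => i.
rewrite eG eT eGp eTp.
exact: alpha_inv.
Qed.

Lemma beta_gen (R : realType) (n : nat) (pp : 'I_n -> R)
  (G T G' : 'I_n -> 'I_n -> 'I_n -> R)
  (Gx Tx Gx' Gp Tp Gp' : 'I_n -> 'I_n -> 'I_n -> 'I_n -> R)
  (V : 'I_n -> R) (Vx Vp : 'I_n -> 'I_n -> R) (Q Q' : 'I_n -> R)
  (Qx Qx' Qp Qp' : 'I_n -> 'I_n -> R)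
  (W : 'I_n -> R) (Wx Wp : 'I_n -> 'I_n -> R) (U U' : 'I_n -> R)
  (Ux Ux' Up Up' : 'I_n -> 'I_n -> R) k :
  (forall c i j, G c i j = G c j i) -> (forall c i j, T c i j = T c j i) ->
  (forall m c i j, Gp m c i j = Gp m c j i) -> (forall m c i j, Tp m c i j = Tp m c j i) ->
  (forall m c i j, Tx m c i j = Tx m c j i) ->
  (forall c i j, G' c i j = G c i j + T c i j) ->
  (forall m c i j, Gx' m c i j = Gx m c i j + Tx m c i j) ->
  (forall m c i j, Gp' m c i j = Gp m c i j + Tp m c i j) ->
  (forall i, Q' i = Q i - \sum_(l < n) \sum_(s < n) T l i s * pp l * V s) ->
  (forall m i, Qx' m i = Qx m i - \sum_(l < n) \sum_(s < n)
        (Tx m l i s * pp l * V s + T l i s * pp l * Vx m s)) ->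
  (forall m i, Qp' m i = Qp m i - (\sum_(l < n) \sum_(s < n)
        (Tp m l i s * pp l * V s + T l i s * pp l * Vp m s) + \sum_(s < n) T m i s * V s)) ->
  (forall i, U' i = U i + \sum_(b < n) (\sum_(c < n) pp c * T c i b) * W b) ->
  (forall m i, Ux' m i = Ux m i + \sum_(b < n) ((\sum_(c < n) pp c * Tx m c i b) * W b
                                 + (\sum_(c < n) pp c * T c i b) * Wx m b)) ->
  (forall m i, Up' m i = Up m i + \sum_(b < n) ((\sum_(c < n) pp c * Tp m c i b + T m i b) * W b
                                 + (\sum_(c < n) pp c * T c i b) * Wp m b)) ->
  betaF G' Gx' Gp' pp V Vx Vp Q' Qx' Qp' W U' Ux' Up' k
  = betaF G Gx Gp pp V Vx Vp Q Qx Qp W U Ux Up k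
    + \sum_(r < n) (\sum_(c < n) pp c * T c k r) * alphaF G Gp pp V Vp Q Qp W Wx Wp U r.
Proof.
move=> sG sT sGp sTp sTx hG hGx hGp hQ hQx hQp hU hUx hUp.
have eG : G = symf3 (fun c i j => G c i j / 2).
  by apply/funext => c; apply/funext => i; apply/funext => j; rewrite /symf3 -lock -half_sym.
have eT : T = symf3 (fun c i j => T c i j / 2).
  by apply/funext => c; apply/funext => i; apply/funext => j; rewrite /symf3 -lock -half_sym.
have eGp : Gp = symf4 (fun m c i j => Gp m c i j / 2).
  by apply/funext => m; apply/funext => c; apply/funext => i; apply/funext => j;
     rewrite /symf4 -lock -half_sym.
have eTp : Tp = symf4 (fun m c i j => Tp m c i j / 2).
  by apply/funext => m; apply/funext => c; apply/funext => i; apply/funext => j;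
     rewrite /symf4 -lock -half_sym.
have eTx : Tx = symf4 (fun m c i j => Tx m c i j / 2).
  by apply/funext => m; apply/funext => c; apply/funext => i; apply/funext => j;
     rewrite /symf4 -lock -half_sym.
have -> : G' = (fun c i j => G c i j + T c i j).
  by apply/funext => c; apply/funext => i; apply/funext => j.
have -> : Gx' = (fun m c i j => Gx m c i j + Tx m c i j).
  by apply/funext => m; apply/funext => c; apply/funext => i; apply/funext => j.
have -> : Gp' = (fun m c i j => Gp m c i j + Tp m c i j).
  by apply/funext => m; apply/funext => c; apply/funext => i; apply/funext => j.
have -> : Q' = (fun i => Q i - \sum_(l < n) \sum_(s < n) T l i s * pp l * V s).
  by apply/funext => i.
have -> : Qx' = (fun m i => Qx m i - \sum_(l < n) \sum_(s < n)
        (Tx m l i s * pp l * V s + T l i s * pp l * Vx m s)).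
  by apply/funext => m; apply/funext => i.
have -> : Qp' = (fun m i => Qp m i - (\sum_(l < n) \sum_(s < n)
        (Tp m l i s * pp l * V s + T l i s * pp l * Vp m s) + \sum_(s < n) T m i s * V s)).
  by apply/funext => m; apply/funext => i.
have -> : U' = (fun i => U i + \sum_(b < n) (\sum_(c < n) pp c * T c i b) * W b).
  by apply/funext => i.
have -> : Ux' = (fun m i => Ux m i + \sum_(b < n) ((\sum_(c < n) pp c * Tx m c i b) * W b
                                 + (\sum_(c < n) pp c * T c i b) * Wx m b)).
  by apply/funext => m; apply/funext => i.
have -> : Up' = (fun m i => Up m i + \sum_(b < n) ((\sum_(c < n) pp c * Tp m c i b + T m i b) * W b
                                 + (\sum_(c < n) pp c * T c i b) * Wp m b)).
  by apply/funext => m; apply/funext => i.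
rewrite eG eT eGp eTp eTx.
exact: beta_ch.
Qed.

Lemma eta_gen (R : realType) (n : nat) (al be be' U U' W pp : 'I_n -> R) (Om : R)
  (tau : 'I_n -> 'I_n -> R) k :
  be' k = be k + \sum_(r < n) tau k r * al r ->
  U' k = U k + \sum_(b < n) tau k b * W b ->
  be' k - U' k * (\sum_(s < n) al s * pp s) / Om
  = (be k - U k * (\sum_(s < n) al s * pp s) / Om)
    + \sum_(r < n) tau k r * (\sum_(j < n) al j * (@kdelta R n r j - W r * pp j / Om)).
Proof.
move=> -> ->.
set S := \sum_(s < n) al s * pp s.
have h1 : forall r, \sum_(j < n) al j * (@kdelta R n r j - W r * pp j / Om) = al r - W r * S / Om.
  move=> r.
  rewrite (eq_bigr (fun j => al j * @kdelta R n r j - (W r / Om) * (al j * pp j))); last first.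
    by move=> j _; ring.
  rewrite sumrB -mulr_sumr -/S (bigD1 r) //= /kdelta eqxx mulr1 big1 ?addr0; first ring.
  by move=> j jr; rewrite eq_sym (negbTE jr) mulr0.
under [X in _ = _ + X]eq_bigr => r _ do rewrite h1.
have h2 : \sum_(r < n) tau k r * (al r - W r * S / Om)
    = \sum_(r < n) tau k r * al r - (\sum_(r < n) tau k r * W r) * (S / Om).
  by rewrite mulr_suml -sumrB; apply: eq_bigr => r _; ring.
rewrite h2; ring.
Qed.
Section D.
Variables (R : realType) (n : nat).
Local Notation V := 'rV[R]_n.
Implicit Types (f g : V -> R) (x v : V).

Lemma addfE f g : (fun y => f y + g y) = (f + g)%R. Proof. by []. Qed.
Lemma mulfE f g : (fun y => f y * g y) = (f * g)%R. Proof. by []. Qed.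
Lemma oppfE f : (fun y => - f y) = (- f)%R. Proof. by []. Qed.
Lemma subfE f g : (fun y => f y - g y) = (f - g)%R. Proof. by []. Qed.

Lemma dvD f g x v : derivable f x v -> derivable g x v -> derivable (fun y => f y + g y) x v.
Proof. by move=> df dg; rewrite addfE; exact: derivableD. Qed.
Lemma drD f g x v : derivable f x v -> derivable g x v ->
  derive (fun y => f y + g y) x v = derive f x v + derive g x v.
Proof. by move=> df dg; rewrite addfE; exact: deriveD. Qed.
Lemma dvB f g x v : derivable f x v -> derivable g x v -> derivable (fun y => f y - g y) x v.
Proof. by move=> df dg; rewrite subfE; exact: derivableB. Qed.
Lemma drB f g x v : derivable f x v -> derivable g x v ->
  derive (fun y => f y - g y) x v = derive f x v - derive g x v.
Proof. by move=> df dg; rewrite subfE; exact: deriveB. Qed.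
Lemma dvM f g x v : derivable f x v -> derivable g x v -> derivable (fun y => f y * g y) x v.
Proof. by move=> df dg; rewrite mulfE; exact: derivableM. Qed.
Lemma drM f g x v : derivable f x v -> derivable g x v ->
  derive (fun y => f y * g y) x v = f x * derive g x v + g x * derive f x v.
Proof. by move=> df dg; rewrite mulfE deriveM. Qed.
Lemma sumfE (F : 'I_n -> V -> R) : (fun y => \sum_(i < n) F i y) = \sum_(i < n) F i.
Proof. by apply/funext => y; rewrite fct_sumE. Qed.
Lemma dvS (F : 'I_n -> V -> R) x v : (forall i, derivable (F i) x v) ->
  derivable (fun y => \sum_(i < n) F i y) x v.
Proof. by move=> dF; rewrite sumfE; exact: derivable_sum. Qed.
Lemma drS (F : 'I_n -> V -> R) x v : (forall i, derivable (F i) x v) ->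
  derive (fun y => \sum_(i < n) F i y) x v = \sum_(i < n) derive (F i) x v.
Proof. by move=> dF; rewrite sumfE derive_sum. Qed.
Lemma dvC (a : R) x v : derivable (fun _ : V => a) x v.
Proof. exact: derivable_cst. Qed.
Lemma drC (a : R) x v : derive (fun _ : V => a) x v = 0.
Proof. exact: derive_cst. Qed.
Lemma dvP (c : 'I_n) x v : derivable (fun q : V => q 0 c) x v.
Proof. exact/diff_derivable/differentiable_coord. Qed.
Lemma drP (c : 'I_n) x v : derive (fun q : V => q 0 c) x v = v 0 c.
Proof.
have @f : {linear V -> R}.
  by exists (fun N : V => N 0 c); do 2![eexists]; do ?[constructor];
     rewrite ?mxE// => ? *; rewrite ?mxE//; move=> ?; rewrite !mxE.
rewrite (_ : (fun _ => _) = f) // deriveE; last exact/linear_differentiable/coord_continuous.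
by rewrite diff_lin //; exact: coord_continuous.
Qed.
End D.

Section G.
Variables (R : realType) (n : nat) (U : set 'rV[R]_n).
Local Notation fnn := (fn R n).

Record gd (f : fnn) : Prop := GD { gdP : forall x p (m : 'I_n), U x ->
  derivable (fun y => f y p) x (@ev R n m) /\ derivable (fun q => f x q) p (@ev R n m) }.
Arguments gdP [f] _ x p m _.

Lemma gdD (f g : fnn) : gd f -> gd g -> gd (fun y q => f y q + g y q).
Proof.
move=> [hf] [hg]; constructor=> x p m Ux; have [f1 f2] := hf x p m Ux; have [g1 g2] := hg x p m Ux.
by split; apply: dvD.
Qed.
Lemma gdB (f g : fnn) : gd f -> gd g -> gd (fun y q => f y q - g y q).
Proof.
move=> [hf] [hg]; constructor=> x p m Ux; have [f1 f2] := hf x p m Ux; have [g1 g2] := hg x p m Ux.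
by split; apply: dvB.
Qed.
Lemma gdM (f g : fnn) : gd f -> gd g -> gd (fun y q => f y q * g y q).
Proof.
move=> [hf] [hg]; constructor=> x p m Ux; have [f1 f2] := hf x p m Ux; have [g1 g2] := hg x p m Ux.
by split; apply: dvM.
Qed.
Lemma gdS (F : 'I_n -> fnn) : (forall i, gd (F i)) -> gd (fun y q => \sum_(i < n) F i y q).
Proof.
move=> hF; constructor=> x p m Ux; split; apply: dvS => i;
  [exact: (gdP (hF i) x p m Ux).1 | exact: (gdP (hF i) x p m Ux).2].
Qed.
Lemma gd_pc (c : 'I_n) : gd (fun y q => pc q c).
Proof. by constructor=> x p m Ux; split; [exact: dvC | exact: dvP]. Qed.
Lemma gd_sm (f : fnn) (ds : seq (bool * 'I_n)) : smooth_on U f -> gd (@Defs.iterD R n ds f).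
Proof. by move=> sf; constructor=> x p m Ux; exact: ((sf ds).2 m x p Ux). Qed.

Lemma dp_ext (f g : fnn) x p m : (forall q, f x q = g x q) -> dp m f x p = dp m g x p.
Proof. move=> e; rewrite /dp; congr derive; apply/funext => q; exact: e. Qed.
Lemma dx_near (f g : fnn) x p m : (\forall y \near x, f y p = g y p) -> dx m f x p = dx m g x p.
Proof. move=> e; rewrite /dx; exact: near_eq_derive. Qed.

Section At.
Variables (x p : 'rV[R]_n) (m : 'I_n).
Hypothesis Ux : U x.

Lemma dxD (f g : fnn) : gd f -> gd g ->
  dx m (fun y q => f y q + g y q) x p = dx m f x p + dx m g x p.
Proof. by move=> hf hg; apply: drD; [exact: (gdP hf x p m Ux).1 | exact: (gdP hg x p m Ux).1]. Qed.
Lemma dpD (f g : fnn) : gd f -> gd g ->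
  dp m (fun y q => f y q + g y q) x p = dp m f x p + dp m g x p.
Proof. by move=> hf hg; apply: drD; [exact: (gdP hf x p m Ux).2 | exact: (gdP hg x p m Ux).2]. Qed.
Lemma dxB (f g : fnn) : gd f -> gd g ->
  dx m (fun y q => f y q - g y q) x p = dx m f x p - dx m g x p.
Proof. by move=> hf hg; apply: drB; [exact: (gdP hf x p m Ux).1 | exact: (gdP hg x p m Ux).1]. Qed.
Lemma dpB (f g : fnn) : gd f -> gd g ->
  dp m (fun y q => f y q - g y q) x p = dp m f x p - dp m g x p.
Proof. by move=> hf hg; apply: drB; [exact: (gdP hf x p m Ux).2 | exact: (gdP hg x p m Ux).2]. Qed.
Lemma dxM (f g : fnn) : gd f -> gd g ->
  dx m (fun y q => f y q * g y q) x p = f x p * dx m g x p + g x p * dx m f x p.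
Proof. by move=> hf hg; apply: drM; [exact: (gdP hf x p m Ux).1 | exact: (gdP hg x p m Ux).1]. Qed.
Lemma dpM (f g : fnn) : gd f -> gd g ->
  dp m (fun y q => f y q * g y q) x p = f x p * dp m g x p + g x p * dp m f x p.
Proof. by move=> hf hg; apply: drM; [exact: (gdP hf x p m Ux).2 | exact: (gdP hg x p m Ux).2]. Qed.
Lemma dxS (F : 'I_n -> fnn) : (forall i, gd (F i)) ->
  dx m (fun y q => \sum_(i < n) F i y q) x p = \sum_(i < n) dx m (F i) x p.
Proof. by move=> hF; apply: drS => i; exact: (gdP (hF i) x p m Ux).1. Qed.
Lemma dpS (F : 'I_n -> fnn) : (forall i, gd (F i)) ->
  dp m (fun y q => \sum_(i < n) F i y q) x p = \sum_(i < n) dp m (F i) x p.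
Proof. by move=> hF; apply: drS => i; exact: (gdP (hF i) x p m Ux).2. Qed.
Lemma dx_pc (c : 'I_n) : dx m (fun y q => pc q c) x p = 0.
Proof. exact: drC. Qed.
Lemma dp_pc (c : 'I_n) : dp m (fun y q => pc q c) x p = (c == m)%:R.
Proof. by rewrite /dp /pc drP /ev mxE eqxx. Qed.
End At.
End G.

Ltac gdt := repeat first [ (match goal with
    | H : forall _, gd _ _ |- gd _ _ => apply: H
    | H : forall _ _, gd _ _ |- gd _ _ => apply: H
    | H : forall _ _ _, gd _ _ |- gd _ _ => apply: H end)
  | apply: gdD | apply: gdB | apply: gdM | (apply: gdS => ?) | apply: gd_pc ].

Opaque dx dp.
Section Conc.
Variables (R : realType) (n : nat) (U : set 'rV[R]_n).
Local Notation fnn := (fn R n).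
Local Notation I := 'I_n.
Variables (Gam T : I -> I -> I -> fnn) (V Q : I -> fnn).
Hypotheses (hGam : forall k i j, gd U (Gam k i j)) (hT : forall k i j, gd U (T k i j))
  (hV : forall i, gd U (V i)) (hQ : forall i, gd U (Q i))
  (hVx : forall m i, gd U (dx m (V i))) (hVp : forall m i, gd U (dp m (V i))).

Definition Gam' : I -> I -> I -> fnn := fun k i j x p => Gam k i j x p + T k i j x p.
Definition Q' : I -> fnn := fun i x p => Q i x p
      - \sum_(k < n) \sum_(s < n) T k i s x p * pc p k * V s x p.
Definition Ef (k : I) : fnn := fun y q =>
  \sum_(b < n) (\sum_(c < n) pc q c * T c k b y q) * Wv V b y q.

Lemma Uc_split k : Uc Gam' V Q' k = fun y q => Uc Gam V Q k y q + Ef k y q.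
Proof.
apply/funext => y; apply/funext => q.
exact: (U_ch (fun c i j => Gam c i j y q) (fun c i j => T c i j y q)
   (fun m i => dx m (V i) y q) (fun m i => dp m (V i) y q) (fun i => V i y q)
   (fun i => Q i y q) (pc q) k).
Qed.

Section P.
Variables (x p : 'rV[R]_n).
Hypothesis Ux : U x.

Lemma dpQ' m i : dp m (Q' i) x p = dp m (Q i) x p
  - (\sum_(l < n) \sum_(s < n) (dp m (T l i s) x p * pc p l * V s x p
        + T l i s x p * pc p l * dp m (V s) x p) + \sum_(s < n) T m i s x p * V s x p).
Proof.
rewrite /Q' (@dpB _ _ _ _ _ _ Ux); [| gdt | gdt].
congr (_ - _).
rewrite (@dpS _ _ _ _ _ _ Ux); last by move=> l; gdt.
have e : forall l, dp m (fun y q => \sum_(s < n) T l i s y q * pc q l * V s y q) x p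
  = \sum_(s < n) (dp m (T l i s) x p * pc p l * V s x p + T l i s x p * pc p l * dp m (V s) x p)
    + \sum_(s < n) T l i s x p * V s x p * (l == m)%:R.
  move=> l; rewrite (@dpS _ _ _ _ _ _ Ux); last by move=> s; gdt.
  rewrite -big_split; apply: eq_bigr => s _.
  rewrite (@dpM _ _ _ _ _ _ Ux); [| gdt | gdt]. rewrite (@dpM _ _ _ _ _ _ Ux); [| gdt | gdt]. rewrite dp_pc /=. ring.
under eq_bigr => l _ do rewrite e.
rewrite big_split /=; congr (_ + _).
rewrite exchange_big /=; apply: eq_bigr => s _.
rewrite (bigD1 m) //= eqxx mulr1 big1 ?addr0 // => l /negbTE ->; by rewrite mulr0.
Qed.

Lemma dxQ' m i : dx m (Q' i) x p = dx m (Q i) x p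
  - \sum_(l < n) \sum_(s < n) (dx m (T l i s) x p * pc p l * V s x p
        + T l i s x p * pc p l * dx m (V s) x p).
Proof.
rewrite /Q' (@dxB _ _ _ _ _ _ Ux); [| gdt | gdt].
congr (_ - _).
rewrite (@dxS _ _ _ _ _ _ Ux); last by move=> l; gdt.
apply: eq_bigr => l _.
rewrite (@dxS _ _ _ _ _ _ Ux); last by move=> s; gdt.
apply: eq_bigr => s _.
rewrite (@dxM _ _ _ _ _ _ Ux); [| gdt | gdt]. rewrite (@dxM _ _ _ _ _ _ Ux); [| gdt | gdt]. rewrite dx_pc /=. ring.
Qed.

Lemma gdUc k : gd U (Uc Gam V Q k).
Proof. rewrite /Uc /nabla_vec. gdt. Qed.
Lemma gdWv k : gd U (Wv V k).
Proof. rewrite /Wv. gdt. Qed.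
Lemma gdEf k : gd U (Ef k).
Proof. rewrite /Ef /Wv. gdt. Qed.

Lemma dxU' m k : dx m (Uc Gam' V Q' k) x p = dx m (Uc Gam V Q k) x p
  + \sum_(b < n) ((\sum_(c < n) pc p c * dx m (T c k b) x p) * Wv V b x p
                  + (\sum_(c < n) pc p c * T c k b x p) * dx m (Wv V b) x p).
Proof.
rewrite Uc_split (@dxD _ _ _ _ _ _ Ux); [| exact: gdUc | exact: gdEf].
congr (_ + _).
rewrite /Ef (@dxS _ _ _ _ _ _ Ux); last by move=> b; rewrite /Wv; gdt.
apply: eq_bigr => b _.
have e1 : dx m (fun y q => \sum_(c < n) pc q c * T c k b y q) x p
        = \sum_(c < n) pc p c * dx m (T c k b) x p.
  rewrite (@dxS _ _ _ _ _ _ Ux); last by move=> c; gdt.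
  apply: eq_bigr => c _; rewrite (@dxM _ _ _ _ _ _ Ux); [| gdt | gdt]; rewrite dx_pc /=; ring.
rewrite (@dxM _ _ _ _ _ _ Ux); [| rewrite /Wv; gdt | exact: gdWv].
rewrite e1 /=. ring.
Qed.

Lemma dpU' m k : dp m (Uc Gam' V Q' k) x p = dp m (Uc Gam V Q k) x p
  + \sum_(b < n) ((\sum_(c < n) pc p c * dp m (T c k b) x p + T m k b x p) * Wv V b x p
                  + (\sum_(c < n) pc p c * T c k b x p) * dp m (Wv V b) x p).
Proof.
rewrite Uc_split (@dpD _ _ _ _ _ _ Ux); [| exact: gdUc | exact: gdEf].
congr (_ + _).
rewrite /Ef (@dpS _ _ _ _ _ _ Ux); last by move=> b; rewrite /Wv; gdt.
apply: eq_bigr => b _.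
have e1 : dp m (fun y q => \sum_(c < n) pc q c * T c k b y q) x p
        = \sum_(c < n) pc p c * dp m (T c k b) x p + T m k b x p.
  rewrite (@dpS _ _ _ _ _ _ Ux); last by move=> c; gdt.
  rewrite (eq_bigr (fun c => pc p c * dp m (T c k b) x p + T c k b x p * (c == m)%:R)); last first.
    by move=> c _; rewrite (@dpM _ _ _ _ _ _ Ux); [| gdt | gdt]; rewrite dp_pc /=; ring.
  rewrite big_split /=; congr (_ + _).
  rewrite (bigD1 m) //= eqxx mulr1 big1 ?addr0 // => c /negbTE ->; by rewrite mulr0.
rewrite (@dpM _ _ _ _ _ _ Ux); [| rewrite /Wv; gdt | exact: gdWv].
rewrite e1 /=. ring.
Qed.

End P.

Section K.
Hypotheses (oU : open U)
  (sGam : forall k i j x p, U x -> Gam k i j x p = Gam k j i x p)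
  (sT : forall k i j x p, U x -> T k i j x p = T k j i x p).
Variables (x p : 'rV[R]_n).
Hypothesis Ux : U x.

Lemma dp_sym (F : I -> I -> I -> fnn) :
  (forall k i j x p, U x -> F k i j x p = F k j i x p) ->
  forall m c i j, dp m (F c i j) x p = dp m (F c j i) x p.
Proof.
move=> sF m c i j; apply: dp_ext => q; exact: sF.
Qed.

Lemma dxT_sym m c i j : dx m (T c i j) x p = dx m (T c j i) x p.
Proof.
apply: dx_near.
have nU : nbhs x U := open_nbhs_nbhs (conj oU Ux).
apply: (filterS _ nU) => y Uy /=; exact: sT.
Qed.

Lemma alpha_eq k : alpha Gam' V Q' k x p = alpha Gam V Q k x p.
Proof.
apply: (@alpha_gen _ _ (pc p) (fun c i j => Gam c i j x p) (fun c i j => T c i j x p) (fun c i j => Gam' c i j x p) (fun m c i j => dp m (Gam c i j) x p) (fun m c i j => dp m (T c i j) x p) (fun m c i j => dp m (Gam' c i j) x p) (fun i => V i x p) (fun m i => dp m (V i) x p) (fun i => Q i x p) (fun i => Q' i x p) (fun m i => dp m (Q i) x p) (fun m i => dp m (Q' i) x p) (fun i => Wv V i x p) (fun m i => dx m (Wv V i) x p) (fun m i => dp m (Wv V i) x p) (fun i => Uc Gam V Q i x p) (fun i => Uc Gam' V Q' i x p) k).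
- by move=> c i j; exact: sGam.
- by move=> c i j; exact: sT.
- exact: dp_sym.
- exact: dp_sym.
- by [].
- by move=> m c i j; exact: (@dpD _ _ _ _ _ _ Ux _ _ (hGam c i j) (hT c i j)).
- by [].
- by move=> m i; exact: dpQ'.
- by move=> i; rewrite Uc_split.
Qed.

Lemma beta_eq k : beta Gam' V Q' k x p = beta Gam V Q k x p
  + \sum_(r < n) (\sum_(c < n) pc p c * T c k r x p) * alpha Gam V Q r x p.
Proof.
apply: (@beta_gen _ _ (pc p) (fun c i j => Gam c i j x p) (fun c i j => T c i j x p) (fun c i j => Gam' c i j x p) (fun m c i j => dx m (Gam c i j) x p) (fun m c i j => dx m (T c i j) x p) (fun m c i j => dx m (Gam' c i j) x p) (fun m c i j => dp m (Gam c i j) x p) (fun m c i j => dp m (T c i j) x p) (fun m c i j => dp m (Gam' c i j) x p) (fun i => V i x p) (fun m i => dx m (V i) x p) (fun m i => dp m (V i) x p) (fun i => Q i x p) (fun i => Q' i x p) (fun m i => dx m (Q i) x p) (fun m i => dx m (Q' i) x p) (fun m i => dp m (Q i) x p) (fun m i => dp m (Q' i) x p) (fun i => Wv V i x p) (fun m i => dx m (Wv V i) x p) (fun m i => dp m (Wv V i) x p) (fun i => Uc Gam V Q i x p) (fun i => Uc Gam' V Q' i x p) (fun m i => dx m (Uc Gam V Q i) x p) (fun m i => dx m (Uc Gam' V Q' i) x p) (fun m i => dp m (Uc Gam V Q i) x p) (fun m i => dp m (Uc Gam' V Q' i) x p) k).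
- by move=> c i j; exact: sGam.
- by move=> c i j; exact: sT.
- exact: dp_sym.
- exact: dp_sym.
- by move=> m c i j; exact: dxT_sym.
- by [].
- by move=> m c i j; exact: (@dxD _ _ _ _ _ _ Ux _ _ (hGam c i j) (hT c i j)).
- by move=> m c i j; exact: (@dpD _ _ _ _ _ _ Ux _ _ (hGam c i j) (hT c i j)).
- by [].
- by move=> m i; exact: dxQ'.
- by move=> m i; exact: dpQ'.
- by move=> i; rewrite Uc_split.
- by move=> m i; exact: dxU'.
- by move=> m i; exact: dpU'.
Qed.

Lemma eta_eq k : Defs.eta Gam' V Q' k x p = Defs.eta Gam V Q k x p
  + \sum_(r < n) (\sum_(c < n) pc p c * T c k r x p)
       * (\sum_(j < n) alpha Gam V Q j x p * Pm V r j x p).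
Proof.
rewrite /Defs.eta.
have -> : \sum_(s < n) alpha Gam' V Q' s x p * pc p s = \sum_(s < n) alpha Gam V Q s x p * pc p s.
  by apply: eq_bigr => s _; rewrite alpha_eq.
apply: (@eta_gen _ _ (fun j => alpha Gam V Q j x p) (fun j => beta Gam V Q j x p) (fun j => beta Gam' V Q' j x p) (fun j => Uc Gam V Q j x p) (fun j => Uc Gam' V Q' j x p) (fun j => Wv V j x p) (pc p) (Omega V x p) (fun a b => \sum_(c < n) pc p c * T c a b x p) k).
- exact: beta_eq.
- by rewrite Uc_split.
Qed.

Lemma key : (forall k, alpha Gam' V Q' k x p = alpha Gam V Q k x p) /\
  (forall k, Defs.eta Gam' V Q' k x p = Defs.eta Gam V Q k x p
  + \sum_(r < n) (\sum_(c < n) pc p c * T c k r x p)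
       * (\sum_(j < n) alpha Gam V Q j x p * Pm V r j x p)).
Proof. split; [exact: alpha_eq | exact: eta_eq]. Qed.
End K.
End Conc.

Unset Implicit Arguments.

Theorem theorem13p1 (R : realType) (n : nat) (U : set 'rV[R]_n)
  (Gam : 'I_n -> 'I_n -> 'I_n -> fn R n) (V Q : 'I_n -> fn R n)
  (T : 'I_n -> 'I_n -> 'I_n -> fn R n) :
  (2 <= n)%N -> open U ->
  sym_connection U Gam -> regular U V ->
  (forall i, smooth_on U (Q i)) ->
  (forall k i j, smooth_on U (T k i j)) ->
  (forall k i j x p, U x -> T k i j x p = T k j i x p) ->
  let Gam' := fun k i j x p => Gam k i j x p + T k i j x p in
  let Q' := fun i x p => Q i x p
      - \sum_(k < n) \sum_(s < n) T k i s x p * pc p k * V s x p in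
  (forall x p, U x -> p != 0 -> weak_normal_at Gam V Q x p) <->
  (forall x p, U x -> p != 0 -> weak_normal_at Gam' V Q' x p).
Proof.
move=> _ oU [sGam symGam] [sV _] sQ sTT symT Gam'0 Q'0.
have hGam : forall k i j, gd U (Gam k i j) := fun k i j => gd_sm [::] (sGam k i j).
have hT : forall k i j, gd U (T k i j) := fun k i j => gd_sm [::] (sTT k i j).
have hV : forall i, gd U (V i) := fun i => gd_sm [::] (sV i).
have hQ : forall i, gd U (Q i) := fun i => gd_sm [::] (sQ i).
have hVx : forall m i, gd U (dx m (V i)) := fun m i => gd_sm [:: (true, m)] (sV i).
have hVp : forall m i, gd U (dp m (V i)) := fun m i => gd_sm [:: (false, m)] (sV i).
have K := key hGam hT hV hQ hVx hVp oU symGam symT.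
rewrite /Gam' /Q' in K.
rewrite {}/Gam'0 {}/Q'0.
split => H x p Ux p0 k.
- have Hx := H x p Ux p0.
  have [AE EE] := K x p Ux.
  split.
  + rewrite -[RHS](Hx k).1; apply: eq_bigr => r _; by rewrite AE.
  + rewrite -[RHS](Hx k).2; apply: eq_bigr => r _; rewrite EE big1 ?addr0 // => q _.
    by rewrite (Hx q).1 mulr0.
- have Hx := H x p Ux p0.
  have [AE EE] := K x p Ux.
  have A0 : forall q, \sum_(j < n) alpha Gam V Q j x p * Pm V q j x p = 0.
    by move=> q; rewrite -[RHS](Hx q).1; apply: eq_bigr => r _; rewrite AE.
  split.
  + by rewrite (A0 k).
  + rewrite -[RHS](Hx k).2; apply: eq_bigr => r _; rewrite EE big1 ?addr0 // => q _.
    by rewrite A0 mulr0.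
Qed.
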